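(* Under the standing setup with $\gamma>0$, the Nash equilibrium $(g^*,h^* )$ of the zero-sum game in which Georgia chooses $g\in[0,\underline s]$ to minimize $f(g,h)$ and Hank chooses $h\in[\overline s,1]$ to maximize $f(g,h)$ is as follows: (i) if $m(0,1)\ge0$, then $(g^*,h^* )=(0,1)$ if $q(0,1)\ge0$; $(g^*,h^* )=(0,\overline s)$ if $q(0,\overline s)\le0$; and $(g^*,h^* )=(0,r(0))$ otherwise; (ii) if $m(\underline s,1)\le0$, then $(g^*,h^* )=(\underline s,1)$; (iii) otherwise, $(g^*,h^* )=(w(1),1)$.
   Context: Standing setup. Fix $n\in\mathbb N$ and $W=[w_{ij}]\in\mathbb R^{n\times n}$ with $w_{ij}\ge0$, $w_{ii}=0$. Let $\|W\|_\infty=\max_i\sum_j|w_{ij}|$, $\|W\|_1=\max_j\sum_i|w_{ij}|$, let $\lambda$ be the spectral radius of $W$, and assume there is $c\in\mathbb R^n$ with all entries positive and $W^\top c=\lambda c$. Fix $\beta\ge\gamma\ge0$ with $1-\max\{\|W\|_\infty,\|W\|_1\}>\max\{2\beta,4\gamma\}$. Fix $s\in[0,1]^n$, $\overline s=\max_is_i$, $\underline s=\min_is_i$. Set $\widehat c_i=c_i/\sum_jc_j$, $\widehat s=\sum_i\widehat c_is_i$, $\chi=\sum_i\widehat c_is_i\sum_jw_{ij}$. Define $$f(g,h)=\frac{(1-2\beta+(h-g)\gamma)\widehat s-\chi+(h+g)\beta+(g^2-h^2)\gamma}{1-\lambda+(g-h)\gamma}\,c^\top\mathbf 1$$ (the centrality-weighted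 steady state of the opinion dynamics with sources $g,h$), and $$q(g,h)=(\beta+\gamma\widehat s-2\gamma h)(1-\lambda+\gamma g)+\gamma\big[(1-2\beta-g\gamma)\widehat s-\chi+g\beta+g^2\gamma\big]+\gamma^2h^2,$$ $$m(g,h)=(\beta-\gamma\widehat s+2\gamma g)(1-\lambda-h\gamma)+g^2\gamma^2-\gamma\big[(1-2\beta+h\gamma)\widehat s+h\beta-h^2\gamma-\chi\big],$$ $$r(g)=\frac{1-\lambda}{\gamma}+g-\frac{1}{\gamma}\sqrt{(1-\lambda)(1-\lambda-\beta+2g\gamma)-(2-\lambda-2\beta)\gamma\widehat s-2g\beta\gamma+\gamma\chi},$$ $$w(h)=\frac{1}{\gamma}\sqrt{(1-\lambda)(1-\lambda-2h\gamma-\beta)+(2-\lambda-2\beta)\gamma\widehat s+2h\beta\gamma-\chi\gamma}-\frac{1-\lambda}{\gamma}+h.$$ *)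

(* Defs.v *)
From Stdlib Require Import Reals Lra.
Open Scope R_scope.

Fixpoint sumR (n : nat) (f : nat -> R) : R :=
  match n with O => 0 | S k => sumR k f + f k end.

(* for n >= 1: max_{i<n} f i  (resp. min) *)
Fixpoint bigmax (n : nat) (f : nat -> R) : R :=
  match n with O => f O | S k => Rmax (bigmax k f) (f k) end.
Fixpoint bigmin (n : nat) (f : nat -> R) : R :=
  match n with O => f O | S k => Rmin (bigmin k f) (f k) end.

Definition norm_inf (n : nat) (W : nat -> nat -> R) : R :=
  bigmax n (fun i => sumR n (fun j => Rabs (W i j))).
Definition norm_1 (n : nat) (W : nat -> nat -> R) : R :=
  bigmax n (fun j => sumR n (fun i => Rabs (W i j))).

(* a + i b is a (complex) eigenvalue of the real matrix W: there is a nonzero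
   complex vector x + i y with W (x + i y) = (a + i b)(x + i y). *)
Definition is_eigenvalue_C (n : nat) (W : nat -> nat -> R) (a b : R) : Prop :=
  exists x y : nat -> R,
    (exists i, (i < n)%nat /\ (x i <> 0 \/ y i <> 0)) /\
    forall i, (i < n)%nat ->
      sumR n (fun j => W i j * x j) = a * x i - b * y i /\
      sumR n (fun j => W i j * y j) = b * x i + a * y i.

Definition is_spectral_radius (n : nat) (W : nat -> nat -> R) (lam : R) : Prop :=
  (exists a b, is_eigenvalue_C n W a b /\ sqrt (a ^ 2 + b ^ 2) = lam) /\
  (forall a b, is_eigenvalue_C n W a b -> sqrt (a ^ 2 + b ^ 2) <= lam).

Definition shat (n : nat) (c s : nat -> R) : R :=
  sumR n (fun i => (c i / sumR n c) * s i).
Definition chi (n : nat) (W : nat -> nat -> R) (c s : nat -> R) : R :=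
  sumR n (fun i => (c i / sumR n c) * s i * sumR n (fun j => W i j)).

Definition f_fun (lam beta gamma sh ch C g h : R) : R :=
  ((1 - 2*beta + (h - g)*gamma) * sh - ch + (h + g)*beta + (g^2 - h^2)*gamma)
  / (1 - lam + (g - h)*gamma) * C.

Definition q_fun (lam beta gamma sh ch g h : R) : R :=
  (beta + gamma*sh - 2*gamma*h) * (1 - lam + gamma*g)
  + gamma * ((1 - 2*beta - g*gamma)*sh - ch + g*beta + g^2*gamma)
  + gamma^2 * h^2.

Definition m_fun (lam beta gamma sh ch g h : R) : R :=
  (beta - gamma*sh + 2*gamma*g) * (1 - lam - h*gamma) + g^2 * gamma^2
  - gamma * ((1 - 2*beta + h*gamma)*sh + h*beta - h^2*gamma - ch).

Definition r_fun (lam beta gamma sh ch g : R) : R :=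
  (1 - lam)/gamma + g
  - (1/gamma) * sqrt ((1 - lam)*(1 - lam - beta + 2*g*gamma)
                      - (2 - lam - 2*beta)*gamma*sh - 2*g*beta*gamma + gamma*ch).

Definition w_fun (lam beta gamma sh ch h : R) : R :=
  (1/gamma) * sqrt ((1 - lam)*(1 - lam - 2*h*gamma - beta)
                    + (2 - lam - 2*beta)*gamma*sh + 2*h*beta*gamma - ch*gamma)
  - (1 - lam)/gamma + h.

Definition is_NE (F : R -> R -> R) (gl gu hl hu g0 h0 : R) : Prop :=
  gl <= g0 <= gu /\ hl <= h0 <= hu /\
  (forall g, gl <= g <= gu -> F g0 h0 <= F g h0) /\
  (forall h, hl <= h <= hu -> F g0 h <= F g0 h0).

(* Main.v *)
Require Import Defs.
From Stdlib Require Import Reals Lra Psatz Lia.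
Open Scope R_scope.

Definition Dd (lam gamma g h : R) := 1 - lam + (g - h) * gamma.
Definition Eh lam beta gamma sh ch g :=
  (1 - lam + g*gamma)^2 - q_fun lam beta gamma sh ch g 0.
Definition Eg lam beta gamma sh ch h :=
  (1 - lam - h*gamma)^2 - m_fun lam beta gamma sh ch 0 h.

Lemma q_D lam beta gamma sh ch g h :
  q_fun lam beta gamma sh ch g h = (Dd lam gamma g h)^2 - Eh lam beta gamma sh ch g.
Proof. unfold Eh, Dd, q_fun. ring. Qed.

Lemma m_D lam beta gamma sh ch g h :
  m_fun lam beta gamma sh ch g h = (Dd lam gamma g h)^2 - Eg lam beta gamma sh ch h.
Proof. unfold Eg, Dd, m_fun. ring. Qed.

Lemma qm_sum lam beta gamma sh ch g h :
  q_fun lam beta gamma sh ch g h + m_fun lam beta gamma sh ch g h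
  = 2 * (beta + gamma*(g-h)) * Dd lam gamma g h.
Proof. unfold q_fun, m_fun, Dd. ring. Qed.

Lemma F_h_diff lam beta gamma sh ch C g h1 h2 :
  Dd lam gamma g h1 <> 0 -> Dd lam gamma g h2 <> 0 ->
  f_fun lam beta gamma sh ch C g h2 - f_fun lam beta gamma sh ch C g h1
  = C * (h2 - h1) * (Dd lam gamma g h1 * Dd lam gamma g h2 - Eh lam beta gamma sh ch g)
    / (Dd lam gamma g h1 * Dd lam gamma g h2).
Proof. unfold f_fun, Eh, Dd, q_fun. intros. field. split; auto. Qed.

Lemma F_g_diff lam beta gamma sh ch C g1 g2 h :
  Dd lam gamma g1 h <> 0 -> Dd lam gamma g2 h <> 0 ->
  f_fun lam beta gamma sh ch C g2 h - f_fun lam beta gamma sh ch C g1 h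
  = C * (g2 - g1) * (Dd lam gamma g1 h * Dd lam gamma g2 h - Eg lam beta gamma sh ch h)
    / (Dd lam gamma g1 h * Dd lam gamma g2 h).
Proof. unfold f_fun, Eg, Dd, m_fun. intros. field. split; auto. Qed.

Lemma sign_up u v E : 0 < u -> 0 < v -> E <= u^2 -> E <= v^2 -> E <= u*v.
Proof. intros. destruct (Rle_dec u v); nra. Qed.
Lemma sign_down u v E : 0 <= u -> 0 <= v -> u^2 <= E -> v^2 <= E -> u*v <= E.
Proof. intros. destruct (Rle_dec u v); nra. Qed.

Lemma frac_nonneg C x P D : 0 < C -> 0 <= x -> 0 <= P -> 0 < D -> 0 <= C * x * P / D.
Proof. intros. unfold Rdiv. apply Rmult_le_pos; [|left; apply Rinv_0_lt_compat; auto].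
  apply Rmult_le_pos; auto. apply Rmult_le_pos; lra. Qed.
Lemma frac_nonpos C x P D : 0 < C -> 0 <= x -> P <= 0 -> 0 < D -> C * x * P / D <= 0.
Proof. intros. assert (0 <= C * x * (-P) / D) by (apply frac_nonneg; lra).
  unfold Rdiv in *. nra. Qed.

Section Mono.
Variables lam beta gamma sh ch C : R.
Let F := f_fun lam beta gamma sh ch C.
Let q := q_fun lam beta gamma sh ch.
Let m := m_fun lam beta gamma sh ch.
Let D := Dd lam gamma.

Lemma Fh_up g h1 h2 : 0 < C -> h1 <= h2 -> 0 < D g h1 -> 0 < D g h2 ->
  0 <= q g h1 -> 0 <= q g h2 -> F g h1 <= F g h2.
Proof. unfold F, q, D; intros. rewrite !q_D in *.
  assert (H5 := F_h_diff lam beta gamma sh ch C g h1 h2 ltac:(lra) ltac:(lra)).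
  assert (0 <= C * (h2 - h1) * (Dd lam gamma g h1 * Dd lam gamma g h2 - Eh lam beta gamma sh ch g)
    / (Dd lam gamma g h1 * Dd lam gamma g h2)).
  { apply frac_nonneg; try lra. assert (Eh lam beta gamma sh ch g <= Dd lam gamma g h1 * Dd lam gamma g h2)
     by (apply sign_up; lra). lra. apply Rmult_lt_0_compat; lra. }
  lra. Qed.

Lemma Fh_down g h1 h2 : 0 < C -> h1 <= h2 -> 0 < D g h1 -> 0 < D g h2 ->
  q g h1 <= 0 -> q g h2 <= 0 -> F g h2 <= F g h1.
Proof. unfold F, q, D; intros. rewrite !q_D in *.
  assert (H5 := F_h_diff lam beta gamma sh ch C g h1 h2 ltac:(lra) ltac:(lra)).
  assert (C * (h2 - h1) * (Dd lam gamma g h1 * Dd lam gamma g h2 - Eh lam beta gamma sh ch g)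
    / (Dd lam gamma g h1 * Dd lam gamma g h2) <= 0).
  { apply frac_nonpos; try lra. assert (Dd lam gamma g h1 * Dd lam gamma g h2 <= Eh lam beta gamma sh ch g)
     by (apply sign_down; lra). lra. apply Rmult_lt_0_compat; lra. }
  lra. Qed.

Lemma Fg_up g1 g2 h : 0 < C -> g1 <= g2 -> 0 < D g1 h -> 0 < D g2 h ->
  0 <= m g1 h -> 0 <= m g2 h -> F g1 h <= F g2 h.
Proof. unfold F, m, D; intros. rewrite !m_D in *.
  assert (H5 := F_g_diff lam beta gamma sh ch C g1 g2 h ltac:(lra) ltac:(lra)).
  assert (0 <= C * (g2 - g1) * (Dd lam gamma g1 h * Dd lam gamma g2 h - Eg lam beta gamma sh ch h)
    / (Dd lam gamma g1 h * Dd lam gamma g2 h)).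
  { apply frac_nonneg; try lra. assert (Eg lam beta gamma sh ch h <= Dd lam gamma g1 h * Dd lam gamma g2 h)
     by (apply sign_up; lra). lra. apply Rmult_lt_0_compat; lra. }
  lra. Qed.

Lemma Fg_down g1 g2 h : 0 < C -> g1 <= g2 -> 0 < D g1 h -> 0 < D g2 h ->
  m g1 h <= 0 -> m g2 h <= 0 -> F g2 h <= F g1 h.
Proof. unfold F, m, D; intros. rewrite !m_D in *.
  assert (H5 := F_g_diff lam beta gamma sh ch C g1 g2 h ltac:(lra) ltac:(lra)).
  assert (C * (g2 - g1) * (Dd lam gamma g1 h * Dd lam gamma g2 h - Eg lam beta gamma sh ch h)
    / (Dd lam gamma g1 h * Dd lam gamma g2 h) <= 0).
  { apply frac_nonpos; try lra. assert (Dd lam gamma g1 h * Dd lam gamma g2 h <= Eg lam beta gamma sh ch h)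
     by (apply sign_down; lra). lra. apply Rmult_lt_0_compat; lra. }
  lra. Qed.
End Mono.

Lemma sumR_ext n f g : (forall i, (i < n)%nat -> f i = g i) -> sumR n f = sumR n g.
Proof. induction n; simpl; intros; auto. rewrite IHn; [rewrite H|]; auto; intros; apply H; lia. Qed.
Lemma sumR_le n f g : (forall i, (i < n)%nat -> f i <= g i) -> sumR n f <= sumR n g.
Proof. induction n; simpl; intros; [lra|]. assert (f n <= g n) by (apply H; lia).
  assert (sumR n f <= sumR n g) by (apply IHn; intros; apply H; lia). lra. Qed.
Lemma sumR_pos n f : (1 <= n)%nat -> (forall i, (i < n)%nat -> 0 < f i) -> 0 < sumR n f.
Proof. induction n; simpl; intros; [lia|]. destruct n.
  - simpl. specialize (H0 0%nat ltac:(lia)). lra.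
  - assert (0 < sumR (S n) f) by (apply IHn; [lia| intros; apply H0; lia]).
    specialize (H0 (S n) ltac:(lia)). lra. Qed.
Lemma sumR_plus n f g : sumR n (fun i => f i + g i) = sumR n f + sumR n g.
Proof. induction n; simpl; [lra|]. rewrite IHn; ring. Qed.
Lemma sumR_scal n a f : sumR n (fun i => a * f i) = a * sumR n f.
Proof. induction n; simpl; [ring|]. rewrite IHn; ring. Qed.
Lemma sumR_swap n m (F : nat -> nat -> R) :
  sumR n (fun i => sumR m (fun j => F i j)) = sumR m (fun j => sumR n (fun i => F i j)).
Proof. induction n; simpl.
  - induction m; simpl; [auto|]. rewrite <- IHm; ring.
  - rewrite IHn. rewrite <- sumR_plus. reflexivity. Qed.
Lemma bigmax_ge n f i : (i < n)%nat -> f i <= bigmax n f.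
Proof. induction n; simpl; intros; [lia|]. destruct (Nat.eq_dec i n).
  - subst. apply Rmax_r.
  - eapply Rle_trans; [apply IHn; lia| apply Rmax_l]. Qed.
Lemma bigmax_le1 n f : (1 <= n)%nat -> (forall i, (i < n)%nat -> f i <= 1) -> bigmax n f <= 1.
Proof. intros Hn H. assert (forall k, (k <= n)%nat -> bigmax k f <= 1).
  { induction k; simpl; intros. apply H; lia. apply Rmax_lub; [apply IHk; lia| apply H; lia]. }
  apply H0; lia. Qed.
Lemma bigmin_ge0 n f : (1 <= n)%nat -> (forall i, (i < n)%nat -> 0 <= f i) -> 0 <= bigmin n f.
Proof. intros Hn H. assert (forall k, (k <= n)%nat -> 0 <= bigmin k f).
  { induction k; simpl; intros. apply H; lia. apply Rmin_glb; [apply IHk; lia| apply H; lia]. }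
  apply H0; lia. Qed.

Lemma lam_bound n (W : nat -> nat -> R) c lam :
  (1 <= n)%nat ->
  (forall i j, (i < n)%nat -> (j < n)%nat -> 0 <= W i j) ->
  (forall i, (i < n)%nat -> 0 < c i) ->
  (forall i, (i < n)%nat -> sumR n (fun j => W j i * c j) = lam * c i) ->
  lam <= norm_inf n W.
Proof. intros Hn HW Hc He.
  assert (HC : 0 < sumR n c) by (apply sumR_pos; auto).
  assert (lam * sumR n c = sumR n (fun i => sumR n (fun j => W j i * c j))).
  { rewrite <- sumR_scal. apply sumR_ext. intros; rewrite He; auto. }
  rewrite sumR_swap in H.
  assert (sumR n (fun j => sumR n (fun i => W j i * c j)) <= sumR n (fun j => norm_inf n W * c j)).
  { apply sumR_le. intros j Hj.
    assert (sumR n (fun i => W j i * c j) = c j * sumR n (fun i => Rabs (W j i))).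
    { rewrite <- sumR_scal. apply sumR_ext. intros. rewrite Rabs_right; [ring|]. apply Rle_ge, HW; auto. }
    rewrite H0. specialize (Hc j Hj).
    assert (sumR n (fun i => Rabs (W j i)) <= norm_inf n W).
    { unfold norm_inf. apply (bigmax_ge n (fun i => sumR n (fun j0 => Rabs (W i j0))) j Hj). }
    nra. }
  rewrite sumR_scal in H0. nra. Qed.

Theorem theorem3 (n : nat) (W : nat -> nat -> R) (c s : nat -> R)
  (lam beta gamma : R) :
  (1 <= n)%nat ->
  (forall i j, (i < n)%nat -> (j < n)%nat -> 0 <= W i j) ->
  (forall i, (i < n)%nat -> W i i = 0) ->
  is_spectral_radius n W lam ->
  (forall i, (i < n)%nat -> 0 < c i) ->
  (forall i, (i < n)%nat -> sumR n (fun j => W j i * c j) = lam * c i) ->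
  beta >= gamma -> gamma >= 0 ->
  1 - Rmax (norm_inf n W) (norm_1 n W) > Rmax (2 * beta) (4 * gamma) ->
  (forall i, (i < n)%nat -> 0 <= s i <= 1) ->
  gamma > 0 ->
  let sbar := bigmax n s in
  let slow := bigmin n s in
  let sh := shat n c s in
  let ch := chi n W c s in
  let F := fun g h => f_fun lam beta gamma sh ch (sumR n c) g h in
  let q := q_fun lam beta gamma sh ch in
  let m := m_fun lam beta gamma sh ch in
  let NE := is_NE F 0 slow sbar 1 in
  (* (i) *)
  (m 0 1 >= 0 ->
     (q 0 1 >= 0 -> NE 0 1) /\
     (q 0 1 < 0 -> q 0 sbar <= 0 -> NE 0 sbar) /\
     (q 0 1 < 0 -> q 0 sbar > 0 -> NE 0 (r_fun lam beta gamma sh ch 0))) /\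
  (* (ii) *)
  (m 0 1 < 0 -> m slow 1 <= 0 -> NE slow 1) /\
  (* (iii) *)
  (m 0 1 < 0 -> m slow 1 > 0 -> NE (w_fun lam beta gamma sh ch 1) 1).
Proof.
  intros Hn HW Hd Hsp Hc He Hbg Hg0 Hnorm Hs Hg sbar slow sh ch F q m NE.
  assert (HC : 0 < sumR n c) by (apply sumR_pos; auto).
  assert (Hlam : lam < 1 - 4 * gamma).
  { pose proof (lam_bound n W c lam Hn HW Hc He).
    pose proof (Rmax_l (norm_inf n W) (norm_1 n W)). pose proof (Rmax_r (2*beta) (4*gamma)). lra. }
  assert (Hslow : 0 <= slow) by (apply bigmin_ge0; auto; intros; apply Hs; auto).
  assert (Hsbar : sbar <= 1) by (apply bigmax_le1; auto; intros; apply Hs; auto).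
  assert (HD : forall g h, 0 <= g -> h <= 1 -> 0 < Dd lam gamma g h).
  { intros. unfold Dd. nra. }
  assert (HDmon : forall g1 g2 h1 h2, g1 <= g2 -> h2 <= h1 ->
            Dd lam gamma g1 h1 <= Dd lam gamma g2 h2).
  { intros. unfold Dd. nra. }
  assert (Hqmon : forall g h1 h2, 0 <= g -> h1 <= h2 -> h2 <= 1 -> q g h2 <= q g h1).
  { intros. unfold q. rewrite !q_D. pose proof (HD g h2 H H1). pose proof (HDmon g g h2 h1 ltac:(lra) H0). nra. }
  assert (Hmmon : forall g1 g2 h, 0 <= g1 -> g1 <= g2 -> h <= 1 -> m g1 h <= m g2 h).
  { intros. unfold m. rewrite !m_D. pose proof (HD g1 h H H1). pose proof (HDmon g1 g2 h h H0 ltac:(lra)). nra. }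
  assert (Hm0 : forall h, h <= 1 -> m 0 1 <= m 0 h).
  { intros. assert (0 <= (1-h)*(2*beta - gamma*(1+h))) by (apply Rmult_le_pos; nra).
    assert (0 <= gamma*((1-h)*(2*beta - gamma*(1+h)))) by (apply Rmult_le_pos; lra).
    assert (m 0 h - m 0 1 = gamma*((1-h)*(2*beta - gamma*(1+h)))) by (unfold m, m_fun; ring).
    lra. }
  assert (Hqm : forall g h, 0 <= g -> h <= 1 -> m g h <= 0 -> 0 <= q g h).
  { intros. pose proof (qm_sum lam beta gamma sh ch g h). pose proof (HD g h H H0).
    fold q m in H2. assert (0 <= beta + gamma*(g-h)) by nra. nra. }
  unfold NE, is_NE, F.
  split; [|split].
  - intros Hm01. split; [|split].
    + intros Hq01. split; [lra|]. split; [lra|]. split.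
      * intros g Hgr. apply (Fg_up lam beta gamma sh ch); try lra; try (apply HD; lra).
        all: fold m; pose proof (Hmmon 0 g 1); lra.
      * intros h Hhr. apply (Fh_up lam beta gamma sh ch); try lra; try (apply HD; lra).
        all: fold q; pose proof (Hqmon 0 h 1); lra.
    + intros Hq01 Hqs. split; [lra|]. split; [lra|]. split.
      * intros g Hgr. apply (Fg_up lam beta gamma sh ch); try lra; try (apply HD; lra).
        all: fold m; pose proof (Hmmon 0 g sbar); pose proof (Hm0 sbar); lra.
      * intros h Hhr. apply (Fh_down lam beta gamma sh ch); try lra; try (apply HD; lra).
        all: fold q; pose proof (Hqmon 0 sbar h); lra.
    + intros Hq01 Hqs.
      set (A := Eh lam beta gamma sh ch 0).
      assert (HqA : forall h, q 0 h = (Dd lam gamma 0 h)^2 - A) by (intros; apply q_D).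
      assert (HA : (Dd lam gamma 0 1)^2 < A) by (rewrite HqA in Hq01; lra).
      pose proof (HD 0 1 ltac:(lra) ltac:(lra)).
      pose proof (HD 0 sbar ltac:(lra) ltac:(lra)).
      assert (Hr : Dd lam gamma 0 (r_fun lam beta gamma sh ch 0) = sqrt A).
      { unfold Dd, r_fun. replace ((1 - lam) * (1 - lam - beta + 2 * 0 * gamma) -
          (2 - lam - 2 * beta) * gamma * sh - 2 * 0 * beta * gamma + gamma * ch) with A.
        field. lra. unfold A, Eh, q_fun. ring. }
      assert (HsA : 0 < sqrt A) by (apply sqrt_lt_R0; nra).
      assert (HsA2 : sqrt A ^ 2 = A) by (simpl; rewrite Rmult_1_r; apply sqrt_sqrt; nra).
      set (r := r_fun lam beta gamma sh ch 0) in *.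
      assert (Hr1 : r <= 1).
      { assert (Dd lam gamma 0 1 <= sqrt A) by nra. unfold Dd in *. nra. }
      assert (Hrs : sbar <= r).
      { rewrite HqA in Hqs. assert (sqrt A <= Dd lam gamma 0 sbar) by nra. unfold Dd in *. nra. }
      assert (Hqr : q 0 r = 0) by (rewrite HqA, Hr; lra).
      split; [lra|]. split; [lra|]. split.
      * intros g Hgr. apply (Fg_up lam beta gamma sh ch); try lra; try (apply HD; lra).
        all: fold m; pose proof (Hmmon 0 g r); pose proof (Hm0 r); lra.
      * intros h Hhr. destruct (Rle_dec h r).
        -- apply (Fh_up lam beta gamma sh ch); try lra; try (apply HD; lra).
           all: fold q; pose proof (Hqmon 0 h r); lra.
        -- apply (Fh_down lam beta gamma sh ch); try lra; try (apply HD; lra).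
           all: fold q; pose proof (Hqmon 0 r h); lra.
  - intros Hm01 Hms. split; [lra|]. split; [lra|]. split.
    + intros g Hgr. apply (Fg_down lam beta gamma sh ch); try lra; try (apply HD; lra).
      all: fold m; pose proof (Hmmon g slow 1); lra.
    + intros h Hhr. apply (Fh_up lam beta gamma sh ch); try lra; try (apply HD; lra).
      all: fold q; pose proof (Hqmon slow h 1); pose proof (Hqm slow 1); lra.
  - intros Hm01 Hms.
    set (B := Eg lam beta gamma sh ch 1).
    assert (HmB : forall g, m g 1 = (Dd lam gamma g 1)^2 - B) by (intros; apply m_D).
    assert (HB : (Dd lam gamma 0 1)^2 < B) by (rewrite HmB in Hm01; lra).
    pose proof (HD 0 1 ltac:(lra) ltac:(lra)).
    pose proof (HD slow 1 ltac:(lra) ltac:(lra)).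
    assert (Hw : Dd lam gamma (w_fun lam beta gamma sh ch 1) 1 = sqrt B).
    { unfold Dd, w_fun. replace ((1 - lam) * (1 - lam - 2 * 1 * gamma - beta) +
          (2 - lam - 2 * beta) * gamma * sh + 2 * 1 * beta * gamma - ch * gamma) with B.
      field. lra. unfold B, Eg, m_fun. ring. }
    assert (HsB : 0 < sqrt B) by (apply sqrt_lt_R0; nra).
    assert (HsB2 : sqrt B ^ 2 = B) by (simpl; rewrite Rmult_1_r; apply sqrt_sqrt; nra).
    set (w := w_fun lam beta gamma sh ch 1) in *.
    assert (Hw0 : 0 <= w).
    { assert (Dd lam gamma 0 1 <= sqrt B) by nra. unfold Dd in *. nra. }
    assert (Hws : w <= slow).
    { rewrite HmB in Hms. assert (sqrt B <= Dd lam gamma slow 1) by nra. unfold Dd in *. nra. }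
    assert (Hmw : m w 1 = 0) by (rewrite HmB, Hw; lra).
    split; [lra|]. split; [lra|]. split.
    + intros g Hgr. destruct (Rle_dec g w).
      * apply (Fg_down lam beta gamma sh ch); try lra; try (apply HD; lra).
        all: fold m; pose proof (Hmmon g w 1); lra.
      * apply (Fg_up lam beta gamma sh ch); try lra; try (apply HD; lra).
        all: fold m; pose proof (Hmmon w g 1); lra.
    + intros h Hhr. apply (Fh_up lam beta gamma sh ch); try lra; try (apply HD; lra).
      all: fold q; pose proof (Hqmon w h 1); pose proof (Hqm w 1); lra.
Qed.
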